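(* Let $\varphi_0\in\mathbb{R}$ and let $v$ be a smooth function with $v(\varphi)>0$ and $v'(\varphi)>0$ for all $\varphi\ge\varphi_0$. Let $R_0=\{(\varphi,h)\in\mathbb{R}^2:\varphi_0\le\varphi<\infty,\ \sqrt{v(\varphi)}<h<\infty\}$ and let $\Gamma$ be the curve $h=\sqrt{v(\varphi)}$. Let $h$ be the solution of $h'=\sqrt{h^2-v}$ with initial value $h(\varphi_0)=h_0$, $h_0>\sqrt{v(\varphi_0)}$. Then exactly one of the following holds: either (type A) there is a finite $\varphi_1>\varphi_0$ such that the solution exists in $R_0$ on $[\varphi_0,\varphi_1)$ and reaches the lower boundary $\Gamma$ at $\varphi_1$, i.e. $h(\varphi)\to\sqrt{v(\varphi_1)}$ as $\varphi\to\varphi_1^-$, with a horizontal half-tangent there ($h'(\varphi)\to0$); or (type B) the solution exists and remains in $R_0$ for all $\varphi>\varphi_0$. *)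

(* Defs.v *)
From Stdlib Require Import Reals.
From Coquelicot Require Import Coquelicot.
Open Scope R_scope.

Definition smooth (v : R -> R) : Prop := forall (n : nat) (x : R), ex_derive_n v n x.

Definition in_R0 (phi0 : R) (v : R -> R) (phi hh : R) : Prop :=
  phi0 <= phi /\ sqrt (v phi) < hh.

Definition solves_in_R0 (phi0 h0 : R) (v : R -> R) (h : R -> R) (T : Rbar) : Prop :=
  h phi0 = h0 /\
  filterlim h (at_right phi0) (locally h0) /\
  (forall phi, phi0 < phi -> Rbar_lt phi T ->
     is_derive h phi (sqrt (h phi ^ 2 - v phi))) /\
  (forall phi, phi0 <= phi -> Rbar_lt phi T -> in_R0 phi0 v phi (h phi)).

Definition typeA (phi0 h0 : R) (v : R -> R) : Prop :=
  exists (phi1 : R) (h : R -> R),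
    phi0 < phi1 /\ solves_in_R0 phi0 h0 v h (Finite phi1) /\
    filterlim h (at_left phi1) (locally (sqrt (v phi1))) /\
    filterlim (Derive h) (at_left phi1) (locally 0).

Definition typeB (phi0 h0 : R) (v : R -> R) : Prop :=
  exists h : R -> R, solves_in_R0 phi0 h0 v h p_infty.

(* Main.v *)
Require Import Defs.
From Stdlib Require Import Reals Lra Lia ClassicalEpsilon.
From Coquelicot Require Import Coquelicot.
Open Scope R_scope.


Lemma zero_fwd (d : R -> R) (a b K : R) :
  0 <= K ->
  (forall t, a < t < b -> ex_derive d t /\ Rabs (Derive d t) <= K * Rabs (d t)) ->
  (forall eps, 0 < eps -> exists s, a < s /\ forall s', a < s' <= s -> Rabs (d s') < eps) ->
  forall t, a < t < b -> d t = 0.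
Proof.
  intros HK Hd Hlim t Ht.
  set (u := fun x => d x ^ 2 * exp (- (2 * K) * x)).
  assert (Hmono : forall s, a < s <= t -> u t <= u s).
  { intros s Hs.
    destruct (MVT_gen u s t (fun x => (2 * d x * Derive d x - 2 * K * d x ^ 2) * exp (- (2*K) * x)))
      as [c [Hc Heq]].
    - intros x Hx. rewrite Rmin_left in Hx by lra. rewrite Rmax_right in Hx by lra.
      destruct (Hd x) as [Hex _]. lra.
      unfold u. auto_derive. repeat split; auto.
      change (Derive (fun x0 => d x0) x) with (Derive d x). ring.
    - intros x Hx. rewrite Rmin_left in Hx by lra. rewrite Rmax_right in Hx by lra.
      apply continuity_pt_filterlim. apply (ex_derive_continuous u).
      destruct (Hd x) as [Hex _]. lra. unfold u. auto_derive. repeat split; auto.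
    - rewrite Rmin_left in Hc by lra. rewrite Rmax_right in Hc by lra.
      destruct (Hd c) as [_ Hb]. lra.
      assert (H1 : d c * Derive d c <= K * d c ^ 2).
      { apply Rle_trans with (Rabs (d c) * Rabs (Derive d c)).
        rewrite <- Rabs_mult. apply Rle_abs.
        replace (K * d c ^2) with (Rabs (d c) * (K * Rabs (d c))).
        apply Rmult_le_compat_l. apply Rabs_pos. exact Hb.
        rewrite <- (pow2_abs (d c)). ring. }
      assert (H2 := exp_pos (- (2*K) * c)).
      assert (H3 : (2 * d c * Derive d c - 2 * K * d c ^ 2) * exp (- (2*K) * c) <= 0).
      { apply Rmult_le_0_r; lra. }
      nra. }
  assert (Hut : 0 <= u t).
  { unfold u. apply Rmult_le_pos. apply pow2_ge_0. apply Rlt_le, exp_pos. }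
  destruct (Req_dec (d t) 0) as [E|E]; auto.
  exfalso.
  assert (Hutp : 0 < u t).
  { unfold u. apply Rmult_lt_0_compat. apply pow2_gt_0. exact E. apply exp_pos. }
  set (eps := sqrt (u t * exp (2 * K * a))).
  assert (Heps : 0 < eps).
  { unfold eps. apply sqrt_lt_R0. apply Rmult_lt_0_compat. exact Hutp. apply exp_pos. }
  destruct (Hlim eps Heps) as [s [Has Hs]].
  set (s' := (a + Rmin s t) / 2).
  assert (Hs1 : a < s' <= s).
  { unfold s'. assert (Rmin s t <= s) by apply Rmin_l.
    assert (a < Rmin s t) by (apply Rmin_glb_lt; lra). lra. }
  assert (Hs2 : s' <= t).
  { unfold s'. assert (Rmin s t <= t) by apply Rmin_r.
    assert (a < Rmin s t) by (apply Rmin_glb_lt; lra). lra. }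
  specialize (Hs s' Hs1).
  specialize (Hmono s' (conj (proj1 Hs1) Hs2)).
  assert (Hsq : d s' ^ 2 < u t * exp (2 * K * a)).
  { rewrite <- (pow2_abs (d s')).
    replace (u t * exp (2 * K * a)) with (eps ^ 2).
    assert (0 <= Rabs (d s')) by apply Rabs_pos. nra.
    unfold eps. simpl. rewrite Rmult_1_r. apply sqrt_sqrt.
    apply Rmult_le_pos. lra. apply Rlt_le, exp_pos. }
  assert (Hexp : exp (- (2*K) * s') <= exp (- (2 * K) * a)).
  { destruct (Req_dec K 0) as [K0|K0]. subst K. right. f_equal. ring.
    left. apply exp_increasing. nra. }
  assert (Hprod : exp (2 * K * a) * exp (- (2 * K) * a) = 1).
  { rewrite <- exp_plus. replace (2 * K * a + - (2 * K) * a) with 0 by ring. apply exp_0. }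
  unfold u in Hmono. 
  assert (d s' ^ 2 * exp (- (2 * K) * s') <= d s' ^ 2 * exp (- (2 * K) * a)).
  { apply Rmult_le_compat_l. apply pow2_ge_0. exact Hexp. }
  assert (d s' ^ 2 * exp (- (2 * K) * a) < u t * exp (2 * K * a) * exp (- (2 * K) * a)).
  { apply Rmult_lt_compat_r. apply exp_pos. exact Hsq. }
  rewrite Rmult_assoc, Hprod, Rmult_1_r in H0.
  unfold u in H0. lra.
Qed.

Lemma zero_bwd (d : R -> R) (a b K : R) :
  0 <= K ->
  (forall t, a < t < b -> ex_derive d t /\ Rabs (Derive d t) <= K * Rabs (d t)) ->
  (forall eps, 0 < eps -> exists s, s < b /\ forall s', s <= s' < b -> Rabs (d s') < eps) ->
  forall t, a < t < b -> d t = 0.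
Proof.
  intros HK Hd Hlim t Ht.
  replace t with (- - t) by ring.
  apply (zero_fwd (fun x => d (- x)) (-b) (-a) K HK).
  - intros x Hx. destruct (Hd (-x)) as [Hex Hb]. lra.
    assert (D : is_derive (fun x => d (- x)) x (- Derive d (- x))).
    { auto_derive. exact Hex. change (Derive (fun x0 => d x0) (- x)) with (Derive d (- x)). ring. }
    split. exists (- Derive d (- x)). exact D.
    replace (Derive (fun x0 => d (- x0)) x) with (- Derive d (- x)) by (symmetry; apply is_derive_unique; exact D).
    rewrite Rabs_Ropp. exact Hb.
  - intros eps Heps. destruct (Hlim eps Heps) as [s [Hs1 Hs2]].
    exists (- s). split. lra. intros s' Hs'. apply Hs2. lra.
  - lra.
Qed.


Definition mx (a b : R) := (a + b + Rabs (a - b)) / 2.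
Definition mn (a b : R) := (a + b - Rabs (a - b)) / 2.
Definition cl (lo hi h : R) := mx lo (mn h hi).

Lemma mx_ge_l a b : a <= mx a b. Proof. unfold mx; split_Rabs; lra. Qed.
Lemma mx_ge_r a b : b <= mx a b. Proof. unfold mx; split_Rabs; lra. Qed.
Lemma mx_eq_r a b : a <= b -> mx a b = b. Proof. unfold mx; split_Rabs; lra. Qed.
Lemma mx_le a b c : a <= c -> b <= c -> mx a b <= c. Proof. unfold mx; split_Rabs; lra. Qed.
Lemma mx_lip a b c : Rabs (mx a b - mx a c) <= Rabs (b - c). Proof. unfold mx; split_Rabs; lra. Qed.
Lemma cl_bnd lo hi h : lo <= hi -> lo <= cl lo hi h <= hi.
Proof. unfold cl, mx, mn; split_Rabs; lra. Qed.
Lemma cl_id lo hi h : lo <= h <= hi -> cl lo hi h = h.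
Proof. unfold cl, mx, mn; split_Rabs; lra. Qed.
Lemma cl_lip lo hi h k : Rabs (cl lo hi h - cl lo hi k) <= Rabs (h - k).
Proof. unfold cl, mx, mn; split_Rabs; lra. Qed.

Lemma continuous_mx (f g : R -> R) x : continuous f x -> continuous g x ->
  continuous (fun y => mx (f y) (g y)) x.
Proof.
  intros Hf Hg. unfold mx.
  apply (continuous_mult (fun y => f y + g y + Rabs (f y - g y)) (fun _ => /2)).
  apply (continuous_plus (fun y => f y + g y) (fun y => Rabs (f y - g y))).
  apply (continuous_plus f g); auto.
  apply continuous_Rabs_comp. apply (continuous_minus f g); auto.
  apply continuous_const.
Qed.

Lemma continuous_mn (f g : R -> R) x : continuous f x -> continuous g x ->
  continuous (fun y => mn (f y) (g y)) x.
Proof.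
  intros Hf Hg. unfold mn.
  apply (continuous_mult (fun y => f y + g y - Rabs (f y - g y)) (fun _ => /2)).
  apply (continuous_minus (fun y => f y + g y) (fun y => Rabs (f y - g y))).
  apply (continuous_plus f g); auto.
  apply continuous_Rabs_comp. apply (continuous_minus f g); auto.
  apply continuous_const.
Qed.

Lemma sqrt_lip A B m : 0 < m -> m <= A -> m <= B ->
  Rabs (sqrt A - sqrt B) <= Rabs (A - B) / (2 * sqrt m).
Proof.
  intros Hm HA HB.
  assert (Hsm : 0 < sqrt m) by (apply sqrt_lt_R0; lra).
  assert (HsA : sqrt m <= sqrt A) by (apply sqrt_le_1_alt; lra).
  assert (HsB : sqrt m <= sqrt B) by (apply sqrt_le_1_alt; lra).
  assert (EA : sqrt A * sqrt A = A) by (apply sqrt_sqrt; lra).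
  assert (EB : sqrt B * sqrt B = B) by (apply sqrt_sqrt; lra).
  assert (E : A - B = (sqrt A - sqrt B) * (sqrt A + sqrt B)) by nra.
  rewrite E, Rabs_mult, (Rabs_pos_eq (sqrt A + sqrt B)) by lra.
  set (q := Rabs (sqrt A - sqrt B)).
  assert (Hq : 0 <= q) by apply Rabs_pos.
  replace (q * (sqrt A + sqrt B) / (2 * sqrt m)) with (q + q * ((sqrt A + sqrt B - 2 * sqrt m) / (2 * sqrt m))) by (field; lra).
  assert (0 <= q * ((sqrt A + sqrt B - 2 * sqrt m) / (2 * sqrt m))).
  { apply Rmult_le_pos. exact Hq. apply Rdiv_le_0_compat; lra. }
  lra.
Qed.

Lemma RInt_bound (f : R -> R) a t C :
  (forall s, Rmin a t <= s <= Rmax a t -> continuous f s) ->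
  (forall s, Rmin a t <= s <= Rmax a t -> Rabs (f s) <= C) ->
  Rabs (RInt f a t) <= Rabs (t - a) * C.
Proof.
  intros Hc Hb.
  destruct (Rle_or_lt a t) as [H|H].
  - rewrite (Rabs_pos_eq (t - a)) by lra.
    apply abs_RInt_le_const. exact H.
    apply (ex_RInt_continuous (V := R_CompleteNormedModule)). exact Hc.
    intros s Hs. apply Hb. rewrite Rmin_left, Rmax_right; lra.
  - rewrite <- (opp_RInt_swap (V := R_CompleteNormedModule)).
    2: { apply (ex_RInt_continuous (V := R_CompleteNormedModule)). intros z Hz; apply Hc; rewrite Rmin_comm, Rmax_comm; exact Hz. }
    change (opp (RInt f t a)) with (- RInt f t a).
    rewrite Rabs_Ropp, (Rabs_left (t - a)) by lra. replace (- (t - a)) with (a - t) by ring.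
    apply abs_RInt_le_const. lra.
    apply (ex_RInt_continuous (V := R_CompleteNormedModule)). intros z Hz. apply Hc. rewrite Rmin_comm, Rmax_comm. exact Hz.
    intros s Hs. apply Hb. rewrite Rmin_right, Rmax_left; lra.
Qed.

Lemma geom_zero x C : (forall n, Rabs x <= C * (/2) ^ n) -> x = 0.
Proof.
  intros H.
  destruct (Req_dec x 0) as [E|E]; auto. exfalso.
  assert (Hx : 0 < Rabs x) by (apply Rabs_pos_lt; exact E).
  assert (HC : 0 < C). { specialize (H O). simpl in H. lra. }
  destruct (pow_lt_1_zero (/2)) with (y := Rabs x / C) as [N HN].
  rewrite Rabs_pos_eq; lra.
  apply Rdiv_lt_0_compat; lra.
  specialize (HN N (le_n N)). specialize (H N).
  rewrite Rabs_pos_eq in HN by (apply pow_le; lra).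
  apply (Rmult_lt_compat_l C) in HN; [|lra].
  replace (C * (Rabs x / C)) with (Rabs x) in HN by (field; lra). lra.
Qed.


Lemma ball_R1 (t e x : R) : ball t e x -> Rabs (x - t) < e.
Proof. intro H; exact H. Qed.
Lemma ball_R2 (t e x : R) : Rabs (x - t) < e -> ball t e x.
Proof. intro H; exact H. Qed.

Lemma loc_int p q t : p < t < q -> locally t (fun x => p < x < q).
Proof.
  intros H.
  assert (He : 0 < Rmin (t - p) (q - t)) by (apply Rmin_glb_lt; lra).
  exists (mkposreal _ He). intros x Hx. apply ball_R1 in Hx. simpl in Hx.
  assert (Rmin (t - p) (q - t) <= t - p) by apply Rmin_l.
  assert (Rmin (t - p) (q - t) <= q - t) by apply Rmin_r.
  apply Rabs_def2 in Hx. lra.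
Qed.

Lemma lip_cont (f : R -> R) p q L t : 0 <= L -> p < t < q ->
  (forall s, p < s < q -> Rabs (f s - f t) <= L * Rabs (s - t)) -> continuous f t.
Proof.
  intros HL Ht Hl. apply filterlim_locally. intros eps.
  assert (He : 0 < eps / (L + 1)) by (apply Rdiv_lt_0_compat; [apply cond_pos|lra]).
  generalize (loc_int p q t Ht). intros [d Hd].
  assert (Hm : 0 < Rmin d (eps / (L + 1))) by (apply Rmin_glb_lt; [apply cond_pos|exact He]).
  exists (mkposreal _ Hm). intros x Hx. apply ball_R1 in Hx. simpl in Hx. apply ball_R2.
  assert (Hx1 : Rabs (x - t) < d) by (eapply Rlt_le_trans; [exact Hx| apply Rmin_l]).
  assert (Hx2 : Rabs (x - t) < eps / (L + 1)) by (eapply Rlt_le_trans; [exact Hx| apply Rmin_r]).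
  specialize (Hd x (ball_R2 _ _ _ Hx1)).
  specialize (Hl x Hd).
  assert (L * Rabs (x - t) <= L * (eps / (L+1))) by (apply Rmult_le_compat_l; lra).
  assert (L * (eps / (L + 1)) < eps).
  { assert (0 < eps) by apply cond_pos.
    apply (Rmult_lt_reg_r (L + 1)). lra. field_simplify; lra. }
  lra.
Qed.

Lemma deriv_int (f : R -> R) c a x p q : p < a < q -> p < x < q ->
  (forall z, p < z < q -> continuous f z) ->
  is_derive (fun t => c + RInt f a t) x (f x).
Proof.
  intros Ha Hx Hc.
  assert (HD : is_derive (fun t => RInt f a t) x (f x)).
  2: { assert (H0 : is_derive (fun _ : R => c) x 0) by exact (@is_derive_const R_AbsRing R_NormedModule c x).
       generalize (@is_derive_plus R_AbsRing R_NormedModule _ _ _ _ _ H0 HD). intro H1.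
       replace (f x) with (plus 0 (f x)) by (unfold plus; simpl; ring). exact H1. }
  apply (is_derive_RInt f (fun t => RInt f a t) a x).
  - generalize (loc_int p q x Hx). apply filter_imp. intros b Hb.
    apply (RInt_correct (V := R_CompleteNormedModule)). apply (ex_RInt_continuous (V := R_CompleteNormedModule)).
    intros z Hz. apply Hc.
    assert (Rmin a b <= Rmax a b) by apply Rmin_Rmax.
    unfold Rmin, Rmax in Hz. destruct (Rle_dec a b); lra.
  - apply Hc. exact Hx.
Qed.

Lemma geom_le x C : (forall n, x <= C * (/2) ^ n) -> x <= 0.
Proof.
  intros H.
  destruct (Rle_or_lt x 0) as [E|E]; auto. exfalso.
  assert (HC : 0 < C). { specialize (H O). simpl in H. lra. }
  destruct (pow_lt_1_zero (/2)) with (y := x / C) as [N HN].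
  rewrite Rabs_pos_eq; lra.
  apply Rdiv_lt_0_compat; lra.
  specialize (HN N (le_n N)). specialize (H N).
  rewrite Rabs_pos_eq in HN by (apply pow_le; lra).
  apply (Rmult_lt_compat_l C) in HN; [|lra].
  replace (C * (x / C)) with x in HN by (field; lra). lra.
Qed.


Section Picard.
Variables (v : R -> R) (a y0 m lo hi d B : R).
Hypothesis Hv : forall x, continuous v x.
Hypothesis Hm : 0 < m.
Hypothesis Hlo : 0 < lo.
Hypothesis Hlohi : lo <= hi.
Hypothesis Hd : 0 < d.
Hypothesis HB0 : 0 <= B.
Hypothesis HBv : forall t, Rabs (t - a) <= d -> hi * hi - v t <= B * B.
Hypothesis HmB : m <= B * B.
Hypothesis HK : d * (hi / sqrt m) <= / 2.
Hypothesis Hbox : lo <= y0 - B * d /\ y0 + B * d <= hi.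
Hypothesis Hmin : forall t h, Rabs (t - a) <= d -> lo <= h <= hi -> m <= h * h - v t.

Definition F t h := sqrt (mx m (Rsqr (cl lo hi h) - v t)).
Let K := hi / sqrt m.

Lemma K_pos : 0 <= K.
Proof. unfold K. apply Rdiv_le_0_compat. lra. apply sqrt_lt_R0; lra. Qed.

Lemma F_cont (w : R -> R) x : continuous w x -> continuous (fun s => F s (w s)) x.
Proof.
  intros Hw. unfold F.
  apply continuous_sqrt_comp.
  apply continuous_mx. apply continuous_const.
  apply (continuous_minus (fun s => Rsqr (cl lo hi (w s))) v).
  2: apply Hv.
  unfold Rsqr.
  assert (Hc : continuous (fun s => cl lo hi (w s)) x).
  { unfold cl. apply continuous_mx. apply continuous_const.
    apply continuous_mn. exact Hw. apply continuous_const. }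
  apply (continuous_mult (fun s => cl lo hi (w s)) (fun s => cl lo hi (w s))); exact Hc.
Qed.

Lemma F_lip t h k : Rabs (F t h - F t k) <= K * Rabs (h - k).
Proof.
  unfold F.
  eapply Rle_trans. apply sqrt_lip. exact Hm. apply mx_ge_l. apply mx_ge_l.
  eapply Rle_trans with (Rabs (Rsqr (cl lo hi h) - Rsqr (cl lo hi k)) / (2 * sqrt m)).
  { unfold Rdiv. apply Rmult_le_compat_r.
    apply Rlt_le, Rinv_0_lt_compat. assert (0 < sqrt m) by (apply sqrt_lt_R0; lra). lra.
    eapply Rle_trans. apply mx_lip. right. f_equal. ring. }
  unfold Rsqr.
  replace (cl lo hi h * cl lo hi h - cl lo hi k * cl lo hi k)
    with ((cl lo hi h - cl lo hi k) * (cl lo hi h + cl lo hi k)) by ring.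
  rewrite Rabs_mult.
  assert (Hb1 := cl_bnd lo hi h Hlohi). assert (Hb2 := cl_bnd lo hi k Hlohi).
  assert (H1 : Rabs (cl lo hi h + cl lo hi k) <= 2 * hi) by (rewrite Rabs_pos_eq; lra).
  assert (H2 := cl_lip lo hi h k).
  assert (Hs : 0 < sqrt m) by (apply sqrt_lt_R0; lra).
  unfold K.
  replace (hi / sqrt m * Rabs (h - k)) with (Rabs (h - k) * (2 * hi) / (2 * sqrt m)) by (field; lra).
  unfold Rdiv. apply Rmult_le_compat_r. apply Rlt_le, Rinv_0_lt_compat. lra.
  apply Rmult_le_compat; auto; apply Rabs_pos.
Qed.

Lemma F_bnd t h : Rabs (t - a) <= d -> Rabs (F t h) <= B.
Proof.
  intros Ht. unfold F.
  rewrite Rabs_pos_eq by apply sqrt_pos.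
  rewrite <- (sqrt_square B) by exact HB0.
  apply sqrt_le_1_alt.
  apply mx_le. exact HmB.
  assert (Hb1 := cl_bnd lo hi h Hlohi).
  specialize (HBv t Ht). unfold Rsqr.
  assert (cl lo hi h * cl lo hi h <= hi * hi) by nra. lra.
Qed.

Fixpoint Y (n : nat) : R -> R :=
  match n with
  | O => fun _ => y0
  | S n => fun t => y0 + RInt (fun s => F s (Y n s)) a t
  end.

Lemma Y_cont n x : continuous (Y n) x.
Proof.
  revert x. induction n as [|n IH]; intros x.
  - apply continuous_const.
  - apply (ex_derive_continuous (Y (S n))).
    exists (F x (Y n x)).
    apply (deriv_int (fun s => F s (Y n s)) y0 a x (Rmin a x - 1) (Rmax a x + 1)).
    + assert (Rmin a x <= a) by apply Rmin_l. assert (a <= Rmax a x) by apply Rmax_l. lra.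
    + assert (Rmin a x <= x) by apply Rmin_r. assert (x <= Rmax a x) by apply Rmax_r. lra.
    + intros z _. apply F_cont. apply IH.
Qed.

Lemma Y_der n x : is_derive (Y (S n)) x (F x (Y n x)).
Proof.
  apply (deriv_int (fun s => F s (Y n s)) y0 a x (Rmin a x - 1) (Rmax a x + 1)).
  + assert (Rmin a x <= a) by apply Rmin_l. assert (a <= Rmax a x) by apply Rmax_l. lra.
  + assert (Rmin a x <= x) by apply Rmin_r. assert (x <= Rmax a x) by apply Rmax_r. lra.
  + intros z _. apply F_cont. apply Y_cont.
Qed.

Lemma fn_cont n s : continuous (fun s => F s (Y n s)) s.
Proof. apply F_cont. apply Y_cont. Qed.

Lemma Y_a n : Y n a = y0.
Proof.
  destruct n; simpl. reflexivity.
  rewrite RInt_point. unfold zero; simpl. ring.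
Qed.

Lemma seg_le s t : Rmin a t <= s <= Rmax a t -> Rabs (s - a) <= Rabs (t - a).
Proof.
  unfold Rmin, Rmax. destruct (Rle_dec a t); intros; split_Rabs; lra.
Qed.

Lemma RInt_diff (f g : R -> R) t :
  ex_RInt f a t -> ex_RInt g a t ->
  RInt f a t - RInt g a t = RInt (fun s => f s - g s) a t.
Proof.
  intros H1 H2.
  exact (eq_sym (RInt_minus (V := R_CompleteNormedModule) f g a t H1 H2)).
Qed.

Lemma pm_l (x z : R) : x + z - x = z. Proof. ring. Qed.
Lemma pm_2 (x z w : R) : x + z - (x + w) = z - w. Proof. ring. Qed.

Lemma exR n t : ex_RInt (fun s => F s (Y n s)) a t.
Proof. apply (ex_RInt_continuous (V := R_CompleteNormedModule)). intros; apply fn_cont. Qed.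

Lemma Y_diff n t : Rabs (t - a) <= d -> Rabs (Y (S n) t - Y n t) <= d * B * (/2) ^ n.
Proof.
  revert t. induction n as [|n IH]; intros t Ht.
  - simpl. rewrite pm_l.
    eapply Rle_trans. apply RInt_bound.
    intros; apply (fn_cont O).
    intros s Hs. apply F_bnd. apply seg_le in Hs. lra.
    rewrite Rmult_1_r. apply Rmult_le_compat_r; lra.
  - change (Y (S (S n)) t) with (y0 + RInt (fun s => F s (Y (S n) s)) a t).
    change (Y (S n) t) with (y0 + RInt (fun s => F s (Y n s)) a t).
    rewrite pm_2.
    rewrite RInt_diff by apply exR.
    eapply Rle_trans. apply (RInt_bound _ a t (K * (d * B * (/2) ^ n))).
    + intros s _. apply (continuous_minus (fun s => F s (Y (S n) s)) (fun s => F s (Y n s)));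
        apply fn_cont.
    + intros s Hs. eapply Rle_trans. apply F_lip.
      apply Rmult_le_compat_l. apply K_pos. apply IH. apply seg_le in Hs. lra.
    + assert (0 <= K * (d * B * (/ 2) ^ n)).
      { apply Rmult_le_pos. apply K_pos. apply Rmult_le_pos. apply Rmult_le_pos; lra. apply pow_le; lra. }
      apply Rle_trans with (d * (K * (d * B * (/ 2) ^ n))).
      apply Rmult_le_compat_r; lra.
      fold K in HK.
      replace (d * (K * (d * B * (/ 2) ^ n))) with ((d * K) * (d * B * (/ 2) ^ n)) by ring.
      simpl (( / 2) ^ S n).
      replace (d * B * (/ 2 * (/ 2) ^ n)) with (/2 * (d * B * (/ 2) ^ n)) by ring.
      apply Rmult_le_compat_r. apply Rmult_le_pos. apply Rmult_le_pos; lra. apply pow_le; lra.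
      exact HK.
Qed.

Lemma Y_cauchy n k t : Rabs (t - a) <= d ->
  Rabs (Y (n + k) t - Y n t) <= 2 * d * B * ((/2) ^ n - (/2) ^ (n + k)).
Proof.
  intros Ht. induction k as [|k IH].
  - rewrite Nat.add_0_r. replace (Y n t - Y n t) with 0 by ring.
    rewrite Rabs_R0. right. ring.
  - rewrite Nat.add_succ_r.
    replace (Y (S (n + k)) t - Y n t) with ((Y (S (n + k)) t - Y (n + k) t) + (Y (n + k) t - Y n t)) by ring.
    eapply Rle_trans. apply Rabs_triang.
    assert (H1 := Y_diff (n + k) t Ht).
    simpl ((/2) ^ S (n + k)). lra.
Qed.

Lemma Y_cauchy' n k t : Rabs (t - a) <= d ->
  Rabs (Y (n + k) t - Y n t) <= 2 * d * B * (/2) ^ n.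
Proof.
  intros Ht. eapply Rle_trans. apply Y_cauchy. exact Ht.
  assert (0 <= (/2) ^ (n + k)) by (apply pow_le; lra).
  assert (0 <= 2 * d * B) by (apply Rmult_le_pos; lra).
  nra.
Qed.

Definition y t : R := real (Lim_seq (fun n => Y n t)).

Lemma y_lim t : Rabs (t - a) <= d -> is_lim_seq (fun n => Y n t) (y t).
Proof.
  intros Ht. apply Lim_seq_correct'. apply ex_lim_seq_cauchy_corr.
  intros eps.
  assert (He : 0 < eps / (4 * d * B + 1)).
  { apply Rdiv_lt_0_compat. apply cond_pos. assert (0 <= d * B) by (apply Rmult_le_pos; lra). lra. }
  destruct (pow_lt_1_zero (/2)) with (y := eps / (4 * d * B + 1)) as [N HN].
  rewrite Rabs_pos_eq; lra. exact He.
  exists N. intros n p Hn Hp.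
  specialize (HN N (le_n N)). rewrite Rabs_pos_eq in HN by (apply pow_le; lra).
  replace n with (N + (n - N))%nat by lia.
  replace p with (N + (p - N))%nat by lia.
  assert (H1 := Y_cauchy' N (n - N) t Ht).
  assert (H2 := Y_cauchy' N (p - N) t Ht).
  replace (Y (N + (n - N)) t - Y (N + (p - N)) t)
    with ((Y (N + (n - N)) t - Y N t) - (Y (N + (p - N)) t - Y N t)) by ring.
  eapply Rle_lt_trans. apply Rabs_triang. rewrite Rabs_Ropp.
  assert (HdB : 0 <= d * B) by (apply Rmult_le_pos; lra).
  apply Rle_lt_trans with ((4 * d * B + 1) * (/ 2) ^ N).
  assert (0 <= (/ 2) ^ N) by (apply pow_le; lra). nra.
  apply (Rmult_lt_compat_l (4 * d * B + 1)) in HN; [|lra].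
  replace ((4 * d * B + 1) * (eps / (4 * d * B + 1))) with (pos eps) in HN by (field; lra).
  exact HN.
Qed.

Lemma y_bnd n t : Rabs (t - a) <= d -> Rabs (y t - Y n t) <= 2 * d * B * (/2) ^ n.
Proof.
  intros Ht.
  assert (Hl : is_lim_seq (fun k => Y (k + n) t) (y t)).
  { apply (is_lim_seq_incr_n (fun k => Y k t) n). apply y_lim. exact Ht. }
  assert (Hk : forall k, Y n t - 2 * d * B * (/2) ^ n <= Y (k + n) t <= Y n t + 2 * d * B * (/2) ^ n).
  { intros k. rewrite Nat.add_comm.
    assert (H1 := Y_cauchy' n k t Ht). apply Rabs_le_between in H1. lra. }
  apply Rabs_le. split.
  - assert (H := is_lim_seq_le (fun _ => Y n t - 2 * d * B * (/2) ^ n) (fun k => Y (k + n) t) _ _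
      (fun k => proj1 (Hk k)) (is_lim_seq_const _) Hl).
    simpl in H. lra.
  - assert (H := is_lim_seq_le (fun k => Y (k + n) t) (fun _ => Y n t + 2 * d * B * (/2) ^ n) _ _
      (fun k => proj2 (Hk k)) Hl (is_lim_seq_const _)).
    simpl in H. lra.
Qed.

Lemma Y_lip n s t : Rabs (s - a) <= d -> Rabs (t - a) <= d -> Rabs (Y n s - Y n t) <= B * Rabs (s - t).
Proof.
  intros Hs Ht. destruct n as [|n].
  - simpl. replace (y0 - y0) with 0 by ring. rewrite Rabs_R0.
    apply Rmult_le_pos. lra. apply Rabs_pos.
  - destruct (MVT_gen (Y (S n)) t s (fun x => F x (Y n x))) as [c [Hc E]].
    + intros x _. apply Y_der.
    + intros x _. apply continuity_pt_filterlim. apply Y_cont.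
    + rewrite E, Rabs_mult. apply Rmult_le_compat_r. apply Rabs_pos.
      apply F_bnd.
      assert (Rmin t s <= c <= Rmax t s) by exact Hc.
      unfold Rmin, Rmax in H. destruct (Rle_dec t s); split_Rabs; lra.
Qed.

Lemma y_lip s t : Rabs (s - a) <= d -> Rabs (t - a) <= d -> Rabs (y s - y t) <= B * Rabs (s - t).
Proof.
  intros Hs Ht.
  assert (H : Rabs (y s - y t) - B * Rabs (s - t) <= 0).
  { apply (geom_le _ (4 * d * B)). intros n.
    assert (H1 := y_bnd n s Hs). assert (H2 := y_bnd n t Ht). assert (H3 := Y_lip n s t Hs Ht).
    replace (y s - y t) with ((y s - Y n s) + (Y n s - Y n t) + - (y t - Y n t)) by ring.
    assert (H4 := Rabs_triang ((y s - Y n s) + (Y n s - Y n t)) (- (y t - Y n t))).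
    assert (H5 := Rabs_triang (y s - Y n s) (Y n s - Y n t)).
    rewrite Rabs_Ropp in H4.
    assert (0 <= (/2) ^ n) by (apply pow_le; lra). lra. }
  lra.
Qed.

Lemma y_a : y a = y0.
Proof.
  unfold y. rewrite (Lim_seq_ext _ (fun _ => y0)). rewrite Lim_seq_const. reflexivity.
  intros n. apply Y_a.
Qed.

Lemma y_cont t : a - d < t < a + d -> continuous y t.
Proof.
  intros Ht. apply (lip_cont y (a - d) (a + d) B t HB0 Ht).
  intros s Hs. apply y_lip; split_Rabs; lra.
Qed.

Let g s := F s (y s).

Lemma g_cont z : a - d < z < a + d -> continuous g z.
Proof. intros Hz. apply F_cont. apply y_cont. exact Hz. Qed.

Lemma y_int t : a - d < t < a + d -> y t = y0 + RInt g a t.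
Proof.
  intros Ht.
  assert (Ht' : Rabs (t - a) < d) by (split_Rabs; lra).
  assert (Hseg : forall s, Rmin a t <= s <= Rmax a t -> a - d < s < a + d).
  { intros s Hs. apply seg_le in Hs. split_Rabs; lra. }
  assert (Hexg : ex_RInt g a t).
  { apply (ex_RInt_continuous (V := R_CompleteNormedModule)). intros z Hz. apply g_cont. auto. }
  assert (E : y t - (y0 + RInt g a t) = 0).
  { apply (geom_zero _ (2 * d * B + d * K * (2 * d * B))). intros n.
    replace (y t - (y0 + RInt g a t)) with ((y t - Y (S n) t) + (Y (S n) t - (y0 + RInt g a t))) by ring.
    eapply Rle_trans. apply Rabs_triang.
    assert (H1 := y_bnd (S n) t (Rlt_le _ _ Ht')).
    change (Y (S n) t) with (y0 + RInt (fun s => F s (Y n s)) a t).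
    rewrite pm_2. rewrite RInt_diff by (auto; apply exR).
    assert (H2 : Rabs (RInt (fun s => F s (Y n s) - g s) a t) <= Rabs (t - a) * (K * (2 * d * B * (/2) ^ n))).
    { apply RInt_bound.
      - intros s Hs. apply (continuous_minus (fun s => F s (Y n s)) g). apply fn_cont. apply g_cont; auto.
      - intros s Hs. unfold g. eapply Rle_trans. apply F_lip.
        apply Rmult_le_compat_l. apply K_pos. rewrite Rabs_minus_sym. apply y_bnd.
        apply seg_le in Hs. lra. }
    assert (HK0 := K_pos).
    assert (H3 : Rabs (t - a) * (K * (2 * d * B * (/ 2) ^ n)) <= d * K * (2 * d * B) * (/2) ^ n).
    { replace (d * K * (2 * d * B) * (/2) ^ n) with (d * (K * (2 * d * B * (/ 2) ^ n))) by ring.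
      assert (0 <= K * (2 * d * B * (/ 2) ^ n)).
      { apply Rmult_le_pos. exact HK0. apply Rmult_le_pos. apply Rmult_le_pos; lra. apply pow_le; lra. }
      apply Rmult_le_compat_r; lra. }
    simpl ((/2) ^ S n) in H1.
    assert (0 <= 2 * d * B * (/ 2) ^ n).
    { apply Rmult_le_pos. apply Rmult_le_pos; lra. apply pow_le; lra. }
    change (Y (S n) t) with (y0 + RInt (fun s => F s (Y n s)) a t) in H1. lra. }
  lra.
Qed.

Lemma y_box t : Rabs (t - a) <= d -> lo <= y t <= hi.
Proof.
  intros Ht.
  assert (H := y_lip t a Ht). rewrite Rminus_diag, Rabs_R0, y_a in H.
  specialize (H (Rle_trans _ _ _ (Rle_refl 0) (Rlt_le _ _ Hd))).
  assert (B * Rabs (t - a) <= B * d) by (apply Rmult_le_compat_l; lra).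
  apply Rabs_le_between in H. lra.
Qed.

Lemma y_der t : a - d < t < a + d -> is_derive y t (sqrt (y t ^ 2 - v t)).
Proof.
  intros Ht.
  assert (Ht' : Rabs (t - a) <= d) by (split_Rabs; lra).
  apply (is_derive_ext_loc (fun x => y0 + RInt g a x)).
  { generalize (loc_int (a - d) (a + d) t Ht). apply filter_imp. intros x Hx.
    symmetry. apply y_int. exact Hx. }
  replace (sqrt (y t ^ 2 - v t)) with (g t).
  apply (deriv_int g y0 a t (a - d) (a + d)). lra. exact Ht. exact g_cont.
  unfold g, F. rewrite cl_id by (apply y_box; exact Ht').
  rewrite mx_eq_r. unfold Rsqr. f_equal. ring.
  unfold Rsqr. apply Hmin. exact Ht'. apply y_box. exact Ht'.
Qed.

Lemma picard_exists : exists yy : R -> R, yy a = y0 /\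
  forall t, a - d < t < a + d -> is_derive yy t (sqrt (yy t ^ 2 - v t)) /\ lo <= yy t <= hi.
Proof.
  exists y. split. apply y_a. intros t Ht. split. apply y_der. exact Ht.
  apply y_box. split_Rabs; lra.
Qed.

End Picard.


Lemma local_exist (v : R -> R) (a y0 : R) :
  (forall x, continuous v x) -> 0 < y0 -> v a < y0 ^ 2 ->
  exists d m lo hi (yy : R -> R), 0 < d /\ 0 < m /\ 0 < lo /\ yy a = y0 /\
    forall t, a - d < t < a + d ->
      is_derive yy t (sqrt (yy t ^ 2 - v t)) /\ lo <= yy t <= hi /\ m <= yy t ^ 2 - v t.
Proof.
  intros Hv Hy0 Hva.
  set (g := y0 ^ 2 - v a).
  assert (Hg : 0 < g) by (unfold g; lra).
  set (m := g / 2).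
  set (r := Rmin (y0 / 2) (g / (8 * y0))).
  assert (Hr1 : r <= y0 / 2) by apply Rmin_l.
  assert (Hr2 : r <= g / (8 * y0)) by apply Rmin_r.
  assert (Hr0 : 0 < r) by (apply Rmin_glb_lt; [lra| apply Rdiv_lt_0_compat; lra]).
  set (lo := y0 - r). set (hi := y0 + r).
  assert (Hcv := Hv a). unfold continuous in Hcv. rewrite filterlim_locally in Hcv.
  assert (Hg4 : 0 < g / 4) by lra.
  destruct (Hcv (mkposreal _ Hg4)) as [d1 Hd1].
  assert (Hd1' : forall t, Rabs (t - a) < d1 -> Rabs (v t - v a) < g / 4).
  { intros t Ht. apply (Hd1 t). apply ball_R2. exact Ht. }
  set (B2 := m + hi * hi + Rabs (v a) + g / 4).
  assert (HB2 : 0 <= B2).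
  { unfold B2, m. assert (0 <= Rabs (v a)) by apply Rabs_pos. assert (0 <= hi * hi) by nra. lra. }
  set (B := sqrt B2).
  assert (HB0 : 0 <= B) by apply sqrt_pos.
  assert (HBB : B * B = B2) by (apply sqrt_sqrt; exact HB2).
  assert (Hm : 0 < m) by (unfold m; lra).
  assert (Hsm : 0 < sqrt m) by (apply sqrt_lt_R0; lra).
  assert (Hhi : 0 < hi) by (unfold hi; lra).
  set (d := Rmin (d1 / 2) (Rmin (r / (B + 1)) (sqrt m / (2 * hi)))).
  assert (Hd1p : 0 < d1) by apply cond_pos.
  assert (Hda : d <= d1 / 2) by apply Rmin_l.
  assert (Hdb : d <= r / (B + 1)) by (eapply Rle_trans; [apply Rmin_r| apply Rmin_l]).
  assert (Hdc : d <= sqrt m / (2 * hi)) by (eapply Rle_trans; [apply Rmin_r| apply Rmin_r]).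
  assert (Hd : 0 < d).
  { apply Rmin_glb_lt. lra. apply Rmin_glb_lt; apply Rdiv_lt_0_compat; lra. }
  assert (HBd : B * d <= r).
  { apply Rle_trans with (B * (r / (B + 1))). apply Rmult_le_compat_l; lra.
    apply (Rmult_le_reg_r (B + 1)). lra.
    replace (B * (r / (B + 1)) * (B + 1)) with (B * r) by (field; lra). nra. }
  destruct (picard_exists v a y0 m lo hi d B) as [yy [Ha Hyy]].
  - exact Hv.
  - exact Hm.
  - unfold lo; lra.
  - unfold lo, hi; lra.
  - exact Hd.
  - exact HB0.
  - intros t Ht. rewrite HBB. unfold B2.
    assert (Rabs (v t - v a) < g / 4) by (apply Hd1'; lra).
    assert (0 <= m) by lra.
    split_Rabs; lra.
  - rewrite HBB. unfold B2. assert (0 <= Rabs (v a)) by apply Rabs_pos. assert (0 <= hi * hi) by nra. lra.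
  - apply Rle_trans with (sqrt m / (2 * hi) * (hi / sqrt m)).
    apply Rmult_le_compat_r. apply Rdiv_le_0_compat; lra. exact Hdc.
    right. field. lra.
  - unfold lo, hi. lra.
  - intros t h Ht Hh.
    assert (Rabs (v t - v a) < g / 4) by (apply Hd1'; lra).
    assert (lo * lo <= h * h) by (unfold lo in *; nra).
    assert (y0 * y0 - g / 4 <= lo * lo).
    { unfold lo. assert (2 * y0 * r <= g / 4).
      { apply Rle_trans with (2 * y0 * (g / (8 * y0))). apply Rmult_le_compat_l; lra. right. field. lra. }
      nra. }
    unfold g in *. unfold m, g. split_Rabs; simpl in *; lra.
  - exists d, m, lo, hi, yy. split. exact Hd. split. exact Hm. split. unfold lo; lra.
    split. exact Ha. intros t Ht. destruct (Hyy t Ht) as [Hder Hb].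
    split. exact Hder. split. exact Hb.
      replace (yy t ^ 2) with (yy t * yy t) by ring.
      assert (Rabs (v t - v a) < g / 4) by (apply Hd1'; split_Rabs; lra).
      assert (lo * lo <= yy t * yy t) by (unfold lo in *; nra).
      assert (y0 * y0 - g / 4 <= lo * lo).
      { unfold lo. assert (2 * y0 * r <= g / 4).
        { apply Rle_trans with (2 * y0 * (g / (8 * y0))). apply Rmult_le_compat_l; lra. right. field. lra. }
        nra. }
      unfold m, g in *. split_Rabs; simpl in *; lra.
Qed.


Lemma v_cont v : smooth v -> forall x, continuous v x.
Proof. intros H x. apply (ex_derive_continuous (K := R_AbsRing) (V := R_NormedModule)). specialize (H 1%nat x). simpl in H. exact H. Qed.

Lemma lim_sqm {T} (F : (T -> Prop) -> Prop) {FF : Filter F} (y w : T -> R) a b :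
  filterlim y F (locally a) -> filterlim w F (locally b) ->
  filterlim (fun t => y t * y t - w t) F (locally (a * a - b)).
Proof.
  intros Hy Hw.
  apply (filterlim_comp_2 (G := locally (a * a)) (H := locally b) (fun t => y t * y t) w (fun p q => plus p (opp q))).
  - apply (filterlim_comp_2 (G := locally a) (H := locally a) y y mult); auto. apply (filterlim_mult a a).
  - exact Hw.
  - apply (filterlim_comp_2 (G := locally (a * a)) (H := locally (opp b)) (fun x : R * R => fst x) (fun x => opp (snd x)) plus).
    + apply filterlim_fst.
    + eapply filterlim_comp. apply filterlim_snd. apply (filterlim_opp (K := R_AbsRing) (V := R_NormedModule)).
    + apply (filterlim_plus (a * a) (opp b)).
Qed.

Lemma ev_gt {T} (F : (T -> Prop) -> Prop) {FF : Filter F} (f : T -> R) L c :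
  filterlim f F (locally L) -> c < L -> F (fun t => c < f t).
Proof.
  intros H Hc. rewrite filterlim_locally in H.
  assert (He : 0 < L - c) by lra.
  specialize (H (mkposreal _ He)). apply (filter_imp _ _ (fun t Ht => Ht)) in H.
  revert H. apply filter_imp. intros t Ht. apply ball_R1 in Ht. simpl in Ht.
  apply Rabs_def2 in Ht. lra.
Qed.

Lemma ev_lt {T} (F : (T -> Prop) -> Prop) {FF : Filter F} (f : T -> R) L c :
  filterlim f F (locally L) -> L < c -> F (fun t => f t < c).
Proof.
  intros H Hc. rewrite filterlim_locally in H.
  assert (He : 0 < c - L) by lra.
  specialize (H (mkposreal _ He)).
  revert H. apply filter_imp. intros t Ht. apply ball_R1 in Ht. simpl in Ht.
  apply Rabs_def2 in Ht. lra.
Qed.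

Lemma ev_abs {T} (F : (T -> Prop) -> Prop) {FF : Filter F} (f : T -> R) L eps :
  filterlim f F (locally L) -> 0 < eps -> F (fun t => Rabs (f t - L) < eps).
Proof.
  intros H Hc. rewrite filterlim_locally in H.
  specialize (H (mkposreal _ Hc)).
  revert H. apply filter_imp. intros t Ht. apply ball_R1 in Ht. exact Ht.
Qed.

Lemma at_right_ex (x : R) (P : R -> Prop) : at_right x P -> exists e, 0 < e /\ forall u, x < u < x + e -> P u.
Proof.
  intros [e He]. exists e. split. apply cond_pos. intros u Hu. apply He.
  apply ball_R2. apply Rabs_def1; lra. lra.
Qed.

Lemma at_left_ex (x : R) (P : R -> Prop) : at_left x P -> exists e, 0 < e /\ forall u, x - e < u < x -> P u.
Proof.
  intros [e He]. exists e. split. apply cond_pos. intros u Hu. apply He.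
  apply ball_R2. apply Rabs_def1; lra. lra.
Qed.

Lemma sqrt_lt_sq x y : 0 <= x -> 0 < y -> x < y ^ 2 -> sqrt x < y.
Proof.
  intros Hx Hy H. rewrite <- (sqrt_pow2 y) by lra. apply sqrt_lt_1_alt. lra.
Qed.

Lemma sq_of_sqrt_lt x y : 0 <= x -> sqrt x < y -> x < y ^ 2 /\ 0 < y.
Proof.
  intros Hx H. assert (0 <= sqrt x) by apply sqrt_pos.
  assert (E : sqrt x * sqrt x = x) by (apply sqrt_sqrt; lra). split; nra.
Qed.


Lemma Rbar_between (x : R) (T1 T2 : Rbar) : Rbar_lt x T1 -> Rbar_lt x T2 ->
  exists c, x < c /\ Rbar_lt c T1 /\ Rbar_lt c T2.
Proof.
  intros H1 H2.
  destruct T1 as [r1| |]; destruct T2 as [r2| |]; simpl in *; try contradiction.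
  - exists ((x + Rmin r1 r2) / 2).
    assert (Rmin r1 r2 <= r1) by apply Rmin_l. assert (Rmin r1 r2 <= r2) by apply Rmin_r.
    assert (x < Rmin r1 r2) by (apply Rmin_glb_lt; lra). lra.
  - exists ((x + r1) / 2). simpl; repeat split; try lra; exact I.
  - exists ((x + r2) / 2). simpl; repeat split; try lra; exact I.
  - exists (x + 1). simpl; repeat split; try lra; exact I.
Qed.

Lemma rhs_lip (p q w m M : R) : 0 < m -> m <= p * p - w -> m <= q * q - w -> 0 <= p -> 0 <= q ->
  p + q <= M ->
  Rabs (sqrt (p ^ 2 - w) - sqrt (q ^ 2 - w)) <= M / (2 * sqrt m) * Rabs (p - q).
Proof.
  intros Hm Hp Hq Hp0 Hq0 HM.
  eapply Rle_trans. apply sqrt_lip. exact Hm. simpl; lra. simpl; lra.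
  replace (p ^ 2 - w - (q ^ 2 - w)) with ((p - q) * (p + q)) by ring.
  rewrite Rabs_mult, (Rabs_pos_eq (p + q)) by lra.
  assert (Hs : 0 < sqrt m) by (apply sqrt_lt_R0; lra).
  replace (M / (2 * sqrt m) * Rabs (p - q)) with (Rabs (p - q) * M / (2 * sqrt m)) by (field; lra).
  unfold Rdiv. apply Rmult_le_compat_r. apply Rlt_le, Rinv_0_lt_compat. lra.
  apply Rmult_le_compat_l. apply Rabs_pos. exact HM.
Qed.

Lemma diff_der (y z : R -> R) t ly lz : is_derive y t ly -> is_derive z t lz ->
  ex_derive (fun s => y s - z s) t /\ Derive (fun s => y s - z s) t = ly - lz.
Proof.
  intros Hy Hz.
  assert (H : is_derive (fun s => y s - z s) t (ly - lz)).
  { exact (@is_derive_minus R_AbsRing R_NormedModule y z t ly lz Hy Hz). }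
  split. exists (ly - lz). exact H. apply is_derive_unique. exact H.
Qed.

Lemma cont_pt_of (f : R -> R) x : continuous f x -> continuity_pt f x.
Proof. intros H. apply continuity_pt_filterlim. exact H. Qed.

Lemma solves_cont phi0 h0 v y T phi : solves_in_R0 phi0 h0 v y T -> phi0 < phi -> Rbar_lt phi T ->
  continuous y phi.
Proof.
  intros [_ [_ [Hd _]]] H1 H2. apply (ex_derive_continuous (K := R_AbsRing) (V := R_NormedModule)).
  exists (sqrt (y phi ^ 2 - v phi)). apply Hd; auto.
Qed.

Lemma solves_pos phi0 h0 v y T phi : (forall p, phi0 <= p -> 0 < v p) ->
  solves_in_R0 phi0 h0 v y T -> phi0 <= phi -> Rbar_lt phi T ->
  v phi < y phi ^ 2 /\ 0 < y phi.
Proof.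
  intros Hv [_ [_ [_ Hin]]] H1 H2. destruct (Hin phi H1 H2) as [_ Hs].
  apply sq_of_sqrt_lt. apply Rlt_le, Hv; auto. exact Hs.
Qed.

Lemma uniq_fwd phi0 h0 v y z T1 T2 :
  (forall x, continuous v x) -> (forall p, phi0 <= p -> 0 < v p) ->
  solves_in_R0 phi0 h0 v y T1 -> solves_in_R0 phi0 h0 v z T2 ->
  forall phi, phi0 <= phi -> Rbar_lt phi T1 -> Rbar_lt phi T2 -> y phi = z phi.
Proof.
  intros Hvc Hvp Sy Sz phi Hphi H1 H2.
  destruct (Req_dec phi phi0) as [E|E].
  { subst phi. destruct Sy as [-> _]. destruct Sz as [-> _]. reflexivity. }
  assert (Hphi' : phi0 < phi) by lra. clear Hphi E.
  destruct (Rbar_between phi T1 T2 H1 H2) as [c [Hc [Hc1 Hc2]]].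
  assert (HT1 : forall t, t <= c -> Rbar_lt t T1).
  { intros t Ht. destruct T1; simpl in *; auto; lra. }
  assert (HT2 : forall t, t <= c -> Rbar_lt t T2).
  { intros t Ht. destruct T2; simpl in *; auto; lra. }
  assert (Hy0 : y phi0 = h0) by apply Sy.
  assert (Hz0 : z phi0 = h0) by apply Sz.
  assert (Hyr : filterlim y (at_right phi0) (locally h0)) by apply Sy.
  assert (Hzr : filterlim z (at_right phi0) (locally h0)) by apply Sz.
  assert (Hyd := proj1 (proj2 (proj2 Sy))).
  assert (Hzd := proj1 (proj2 (proj2 Sz))).
  assert (Hg : v phi0 < h0 ^ 2).
  { rewrite <- Hy0. apply (solves_pos phi0 h0 v y T1); auto. lra. apply HT1. lra. }
  set (g := h0 * h0 - v phi0).
  assert (Hgp : 0 < g) by (unfold g; simpl in Hg; lra).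
  assert (Hvr : filterlim v (at_right phi0) (locally (v phi0))).
  { apply (filterlim_filter_le_1 (F := locally phi0)). apply filter_le_within. apply Hvc. }
  assert (Ly := lim_sqm _ y v _ _ Hyr Hvr).
  assert (Lz := lim_sqm _ z v _ _ Hzr Hvr).
  assert (Hnear : at_right phi0 (fun t => (g / 2 < y t * y t - v t /\ g / 2 < z t * z t - v t) /\
                                          (y t < h0 + 1 /\ z t < h0 + 1))).
  { apply filter_and. apply filter_and.
    apply (ev_gt _ _ _ _ Ly). fold g; lra.
    apply (ev_gt _ _ _ _ Lz). fold g; lra.
    apply filter_and. apply (ev_lt _ _ _ _ Hyr). lra. apply (ev_lt _ _ _ _ Hzr). lra. }
  destruct (at_right_ex _ _ Hnear) as [e [He Hne]].
  set (e' := Rmin e (c - phi0)).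
  assert (He'1 : e' <= e) by apply Rmin_l.
  assert (He'2 : e' <= c - phi0) by apply Rmin_r.
  assert (He'p : 0 < e') by (apply Rmin_glb_lt; lra).
  set (a1 := phi0 + e' / 2).
  assert (Ha1 : phi0 < a1) by (unfold a1; lra).
  assert (Hcy : forall t, a1 <= t <= c -> continuous y t).
  { intros t Ht. apply (solves_cont phi0 h0 v y T1); auto. unfold a1 in Ht; lra. apply HT1; lra. }
  assert (Hcz : forall t, a1 <= t <= c -> continuous z t).
  { intros t Ht. apply (solves_cont phi0 h0 v z T2); auto. unfold a1 in Ht; lra. apply HT2; lra. }
  assert (Ha1c : a1 <= c) by (unfold a1; lra).
  destruct (continuity_ab_min (fun t => y t * y t - v t) a1 c Ha1c) as [t1 [Ht1' Ht1]].
  { intros t Ht. apply cont_pt_of.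
    apply (continuous_minus (fun t => y t * y t) v). apply (continuous_mult y y); apply Hcy; auto. apply Hvc. }
  destruct (continuity_ab_min (fun t => z t * z t - v t) a1 c Ha1c) as [t2 [Ht2' Ht2]].
  { intros t Ht. apply cont_pt_of.
    apply (continuous_minus (fun t => z t * z t) v). apply (continuous_mult z z); apply Hcz; auto. apply Hvc. }
  destruct (continuity_ab_maj y a1 c Ha1c) as [t3 [Ht3' Ht3]].
  { intros t Ht. apply cont_pt_of. apply Hcy; auto. }
  destruct (continuity_ab_maj z a1 c Ha1c) as [t4 [Ht4' Ht4]].
  { intros t Ht. apply cont_pt_of. apply Hcz; auto. }
  assert (P1 : v t1 < y t1 ^ 2).
  { refine (proj1 (solves_pos phi0 h0 v y T1 t1 Hvp Sy _ _)). lra. apply HT1; lra. }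
  assert (P2 : v t2 < z t2 ^ 2).
  { refine (proj1 (solves_pos phi0 h0 v z T2 t2 Hvp Sz _ _)). lra. apply HT2; lra. }
  simpl in P1, P2.
  set (m := Rmin (g / 2) (Rmin (y t1 * y t1 - v t1) (z t2 * z t2 - v t2))).
  assert (Hm1 : m <= g / 2) by apply Rmin_l.
  assert (Hm2 : m <= y t1 * y t1 - v t1) by (eapply Rle_trans; [apply Rmin_r|apply Rmin_l]).
  assert (Hm3 : m <= z t2 * z t2 - v t2) by (eapply Rle_trans; [apply Rmin_r|apply Rmin_r]).
  assert (Hmp : 0 < m) by (apply Rmin_glb_lt; [lra| apply Rmin_glb_lt; lra]).
  set (M := Rmax (2 * h0 + 2) (y t3 + z t4)).
  assert (HM1 : 2 * h0 + 2 <= M) by apply Rmax_l.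
  assert (HM2 : y t3 + z t4 <= M) by apply Rmax_r.
  set (K := M / (2 * sqrt m)).
  assert (HK : 0 <= K).
  { unfold K. apply Rdiv_le_0_compat. 
    assert (0 < y t3).
    { refine (proj2 (solves_pos phi0 h0 v y T1 t3 Hvp Sy _ _)). lra. apply HT1; lra. }
    assert (0 < z t4).
    { refine (proj2 (solves_pos phi0 h0 v z T2 t4 Hvp Sz _ _)). lra. apply HT2; lra. }
    lra. assert (0 < sqrt m) by (apply sqrt_lt_R0; lra). lra. }
  assert (Z := zero_fwd (fun s => y s - z s) phi0 c K HK).
  enough (y phi - z phi = 0) by lra.
  apply Z; [ | | lra].
  - intros t Ht.
    destruct (diff_der y z t _ _ (Hyd t (proj1 Ht) (HT1 t (Rlt_le _ _ (proj2 Ht))))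
                                  (Hzd t (proj1 Ht) (HT2 t (Rlt_le _ _ (proj2 Ht))))) as [Hex HD].
    split. exact Hex. rewrite HD.
    assert (Py := solves_pos phi0 h0 v y T1 t Hvp Sy (Rlt_le _ _ (proj1 Ht)) (HT1 t (Rlt_le _ _ (proj2 Ht)))).
    assert (Pz := solves_pos phi0 h0 v z T2 t Hvp Sz (Rlt_le _ _ (proj1 Ht)) (HT2 t (Rlt_le _ _ (proj2 Ht)))).
    apply rhs_lip; try lra.
    + destruct (Rlt_or_le t (phi0 + e)) as [Ht'|Ht'].
      * destruct (Hne t (conj (proj1 Ht) Ht')) as [[A1 A2] _]. lra.
      * assert (a1 <= t <= c) by (unfold a1; lra). specialize (Ht1' t H). simpl in Ht1'. lra.
    + destruct (Rlt_or_le t (phi0 + e)) as [Ht'|Ht'].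
      * destruct (Hne t (conj (proj1 Ht) Ht')) as [[A1 A2] _]. lra.
      * assert (a1 <= t <= c) by (unfold a1; lra). specialize (Ht2' t H). simpl in Ht2'. lra.
    + destruct (Rlt_or_le t (phi0 + e)) as [Ht'|Ht'].
      * destruct (Hne t (conj (proj1 Ht) Ht')) as [_ [A1 A2]]. lra.
      * assert (a1 <= t <= c) by (unfold a1; lra). specialize (Ht3' t H). specialize (Ht4' t H). lra.
  - intros eps Heps.
    assert (Hn2 : at_right phi0 (fun t => Rabs (y t - h0) < eps / 2 /\ Rabs (z t - h0) < eps / 2)).
    { apply filter_and. apply (ev_abs _ y h0 (eps / 2) Hyr); lra. apply (ev_abs _ z h0 (eps / 2) Hzr); lra. }
    destruct (at_right_ex _ _ Hn2) as [e2 [He2 Hn2']].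
    exists (phi0 + e2 / 2). split. lra. intros s' Hs'.
    destruct (Hn2' s') as [B1 B2]. lra.
    replace (y s' - z s') with ((y s' - h0) - (z s' - h0)) by ring.
    eapply Rle_lt_trans. apply Rabs_triang. rewrite Rabs_Ropp. lra.
Qed.


Lemma at_left_of (T a : R) (P : R -> Prop) : a < T -> (forall u, a < u < T -> P u) -> at_left T P.
Proof.
  intros Ha HP. change (locally T (fun u => u < T -> P u)).
  generalize (loc_int a (T + 1) T (conj Ha (Rlt_plus_1 T))).
  apply filter_imp. intros u Hu Hu'. apply HP. lra.
Qed.

Lemma at_right_of (T b : R) (P : R -> Prop) : T < b -> (forall u, T < u < b -> P u) -> at_right T P.
Proof.
  intros Hb HP. change (locally T (fun u => T < u -> P u)). assert (T - 1 < T) by lra. generalize (loc_int (T - 1) b T (conj H Hb)).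
  apply filter_imp. intros u Hu Hu'. apply HP. lra.
Qed.

Lemma locally_of p q t (P : R -> Prop) : p < t < q -> (forall u, p < u < q -> P u) -> locally t P.
Proof. intros Ht HP. generalize (loc_int p q t Ht). apply filter_imp. exact HP. Qed.

Lemma cont_left (f : R -> R) x : continuous f x -> filterlim f (at_left x) (locally (f x)).
Proof. intros H. apply (filterlim_filter_le_1 (F := locally x)). apply filter_le_within. exact H. Qed.

Lemma cont_right (f : R -> R) x : continuous f x -> filterlim f (at_right x) (locally (f x)).
Proof. intros H. apply (filterlim_filter_le_1 (F := locally x)). apply filter_le_within. exact H. Qed.

Lemma der_cont (f : R -> R) x l : is_derive f x l -> continuous f x.
Proof. intros H. apply (ex_derive_continuous (K := R_AbsRing) (V := R_NormedModule)). exists l; exact H. Qed.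

Lemma sqrt_le_self (h w : R) : 0 < h -> 0 <= w -> sqrt (h ^ 2 - w) <= h.
Proof.
  intros Hh Hw. destruct (Rle_or_lt 0 (h ^ 2 - w)) as [E|E].
  - rewrite <- (sqrt_pow2 h) at 2 by lra. apply sqrt_le_1_alt. lra.
  - rewrite sqrt_neg_0 by lra. lra.
Qed.


Lemma finite_case phi0 h0 v H T :
  (forall x, continuous v x) -> (forall p, phi0 <= p -> 0 < v p) ->
  phi0 < T -> solves_in_R0 phi0 h0 v H (Finite T) ->
  (forall T' y, phi0 < T' -> solves_in_R0 phi0 h0 v y (Finite T') -> T' <= T) ->
  filterlim H (at_left T) (locally (sqrt (v T))) /\ filterlim (Derive H) (at_left T) (locally 0).
Proof.
  intros Hvc Hvp HT SH Hmax.
  assert (Hder : forall t, phi0 < t < T -> is_derive H t (sqrt (H t ^ 2 - v t))).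
  { intros t Ht. apply SH. lra. simpl. lra. }
  assert (Hpos : forall t, phi0 <= t < T -> v t < H t ^ 2 /\ 0 < H t).
  { intros t Ht. apply (solves_pos phi0 h0 v H (Finite T)); auto. lra. simpl; lra. }
  set (s0 := (phi0 + T) / 2).
  assert (Hs0 : phi0 < s0 < T) by (unfold s0; lra).
  assert (Mono : forall s t, s0 <= s -> s <= t -> t < T -> H s <= H t).
  { intros s t H1 H2 H3.
    destruct (MVT_gen H s t (fun x => sqrt (H x ^ 2 - v x))) as [c [Hc E]].
    - intros x Hx. rewrite Rmin_left in Hx by lra. rewrite Rmax_right in Hx by lra. apply Hder. lra.
    - intros x Hx. rewrite Rmin_left in Hx by lra. rewrite Rmax_right in Hx by lra.
      apply cont_pt_of. apply (der_cont _ _ _ (Hder x ltac:(lra))).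
    - assert (0 <= sqrt (H c ^ 2 - v c)) by apply sqrt_pos. nra. }
  assert (Bnd : forall t, s0 <= t < T -> H t <= H s0 * exp (T - s0)).
  { intros t Ht.
    set (w := fun x => H x * exp (- x)).
    assert (Hw : w t <= w s0).
    { destruct (MVT_gen w s0 t (fun x => (sqrt (H x ^ 2 - v x) - H x) * exp (- x))) as [c [Hc E]].
      - intros x Hx. rewrite Rmin_left in Hx by lra. rewrite Rmax_right in Hx by lra.
        unfold w. auto_derive. exists (sqrt (H x ^ 2 - v x)). apply Hder. lra.
        change (Derive (fun x0 => H x0) x) with (Derive H x).
        rewrite (is_derive_unique _ _ _ (Hder x ltac:(lra))). ring.
      - intros x Hx. rewrite Rmin_left in Hx by lra. rewrite Rmax_right in Hx by lra.
        apply cont_pt_of. unfold w. apply (continuous_mult H (fun x => exp (- x))).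
        apply (der_cont _ _ _ (Hder x ltac:(lra))).
        apply (der_cont _ _ (- exp (- x))). auto_derive; auto. ring.
      - rewrite Rmin_left in Hc by lra. rewrite Rmax_right in Hc by lra.
        assert (sqrt (H c ^ 2 - v c) <= H c).
        { apply sqrt_le_self. apply Hpos; lra. apply Rlt_le, Hvp. lra. }
        assert (0 < exp (- c)) by apply exp_pos.
        assert ((sqrt (H c ^ 2 - v c) - H c) * exp (- c) <= 0) by nra.
        nra. }
    unfold w in Hw.
    assert (E1 : exp (- t) * exp (T) = exp (T - t)) by (rewrite <- exp_plus; f_equal; ring).
    assert (E2 : exp (- s0) * exp (T) = exp (T - s0)) by (rewrite <- exp_plus; f_equal; ring).
    assert (Hle : H t * exp (T - t) <= H s0 * exp (T - s0)).
    { rewrite <- E1, <- E2. rewrite <- !Rmult_assoc. apply Rmult_le_compat_r. apply Rlt_le, exp_pos. exact Hw. }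
    assert (1 <= exp (T - t)).
    { rewrite <- exp_0. destruct (Req_dec (T - t) 0) as [Z|Z]. rewrite Z; lra. left; apply exp_increasing; lra. }
    assert (0 < H t) by (apply Hpos; lra). nra. }
  set (E := fun x => exists t, s0 <= t < T /\ x = H t).
  destruct (completeness E) as [L [HLub HLlub]].
  { exists (H s0 * exp (T - s0)). intros x [t [Ht ->]]. apply Bnd. exact Ht. }
  { exists (H s0). exists s0. split; [lra| reflexivity]. }
  assert (HLu : forall t, s0 <= t < T -> H t <= L).
  { intros t Ht. apply HLub. exists t. auto. }
  assert (HLpos : 0 < L).
  { assert (0 < H s0) by (apply Hpos; lra). assert (H s0 <= L) by (apply HLu; lra). lra. }
  assert (HLapp : forall eps, 0 < eps -> exists t1, s0 <= t1 < T /\ L - eps < H t1).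
  { intros eps Heps. apply NNPP. intros Hno.
    assert (L <= L - eps). { apply HLlub. intros x [t [Ht ->]].
      apply Rnot_lt_le. intros Hc. apply Hno. exists t. auto. }
    lra. }
  assert (HL : filterlim H (at_left T) (locally L)).
  { apply filterlim_locally. intros eps.
    destruct (HLapp eps (cond_pos eps)) as [t1 [Ht1 Ht1']].
    apply (at_left_of T t1). lra. intros u Hu.
    apply ball_R2. assert (H t1 <= H u) by (apply Mono; lra). assert (H u <= L) by (apply HLu; lra).
    apply Rabs_def1; lra. }
  assert (Hvl : filterlim v (at_left T) (locally (v T))) by (apply cont_left; apply Hvc).
  assert (Lsq := lim_sqm _ H v _ _ HL Hvl).
  assert (Hge : 0 <= L * L - v T).
  { apply Rnot_lt_le. intros Hc.
    assert (Hev := ev_lt _ _ _ 0 Lsq Hc).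
    destruct (at_left_ex _ _ Hev) as [e [He He']].
    set (t := T - Rmin e (T - phi0) / 2).
    assert (Rmin e (T - phi0) <= e) by apply Rmin_l. assert (Rmin e (T - phi0) <= T - phi0) by apply Rmin_r.
    assert (0 < Rmin e (T - phi0)) by (apply Rmin_glb_lt; lra).
    specialize (He' t ltac:(unfold t; lra)).
    assert (Hp := Hpos t ltac:(unfold t; lra)). simpl in Hp. lra. }
  assert (Heq : L * L - v T = 0).
  { destruct Hge as [Hgt|]; auto. exfalso.
    assert (HvT : v T < L ^ 2) by (simpl; lra).
    destruct (local_exist v T L Hvc HLpos HvT) as [d [m [lo [hi [yy [Hd [Hm [Hlo [HyT Hyy]]]]]]]]].
    set (g' := L * L - v T).
    assert (Hnear := ev_gt _ _ _ (g' / 2) Lsq ltac:(unfold g'; lra)).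
    destruct (at_left_ex _ _ Hnear) as [e1 [He1 Hne]].
    set (eta := Rmin e1 (Rmin d (T - s0))).
    assert (Het1 : eta <= e1) by apply Rmin_l.
    assert (Het2 : eta <= d) by (eapply Rle_trans; [apply Rmin_r| apply Rmin_l]).
    assert (Het3 : eta <= T - s0) by (eapply Rle_trans; [apply Rmin_r| apply Rmin_r]).
    assert (Hetp : 0 < eta) by (apply Rmin_glb_lt; [lra| apply Rmin_glb_lt; lra]).
    set (mm := Rmin m (g' / 2)).
    assert (Hmm1 : mm <= m) by apply Rmin_l.
    assert (Hmm2 : mm <= g' / 2) by apply Rmin_r.
    assert (Hmmp : 0 < mm) by (apply Rmin_glb_lt; unfold g'; lra).
    assert (Hlohi : lo <= hi).
    { destruct (Hyy T ltac:(lra)) as [_ [Hb _]]. lra. }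
    set (K := (L + hi) / (2 * sqrt mm)).
    assert (HK : 0 <= K).
    { unfold K. apply Rdiv_le_0_compat. lra. assert (0 < sqrt mm) by (apply sqrt_lt_R0; lra). lra. }
    assert (Hyl : filterlim yy (at_left T) (locally L)).
    { rewrite <- HyT. apply cont_left. apply (der_cont _ _ _ (proj1 (Hyy T ltac:(lra)))). }
    assert (Eq : forall t, T - eta < t < T -> H t = yy t).
    { intros t Ht. enough (H t - yy t = 0) by lra.
      apply (zero_bwd (fun s => H s - yy s) (T - eta) T K HK); [ | | exact Ht].
      - intros t' Ht'.
        destruct (diff_der H yy t' _ _ (Hder t' ltac:(lra)) (proj1 (Hyy t' ltac:(lra)))) as [Hex HD].
        split. exact Hex. rewrite HD.
        destruct (Hyy t' ltac:(lra)) as [_ [Hb Hm']].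
        assert (Hn := Hne t' ltac:(lra)).
        assert (Hp := Hpos t' ltac:(lra)).
        assert (Hu := HLu t' ltac:(lra)).
        simpl in Hm'.
        apply rhs_lip; lra.
      - intros eps Heps.
        assert (Hn2 : at_left T (fun t => Rabs (H t - L) < eps / 2 /\ Rabs (yy t - L) < eps / 2)).
        { apply filter_and. apply (ev_abs _ H L (eps / 2) HL); lra. apply (ev_abs _ yy L (eps / 2) Hyl); lra. }
        destruct (at_left_ex _ _ Hn2) as [e3 [He3 Hn3]].
        exists (T - e3 / 2). split. lra. intros s' Hs'.
        destruct (Hn3 s') as [B1 B2]. lra.
        replace (H s' - yy s') with ((H s' - L) - (yy s' - L)) by ring.
        eapply Rle_lt_trans. apply Rabs_triang. rewrite Rabs_Ropp. lra. }
    set (G := fun phi => if Rlt_dec phi T then H phi else yy phi).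
    assert (SG : solves_in_R0 phi0 h0 v G (Finite (T + d))).
    { unfold solves_in_R0. split; [|split; [|split]].
      - unfold G. destruct (Rlt_dec phi0 T); [apply SH| lra].
      - apply (filterlim_ext_loc H).
        apply (at_right_of phi0 T). exact HT. intros u Hu. unfold G. destruct (Rlt_dec u T); [reflexivity| lra].
        apply SH.
      - intros phi Hphi HphiT. simpl in HphiT.
        destruct (Rlt_dec phi T) as [Hlt|Hge'].
        + assert (EG : G phi = H phi) by (unfold G; destruct (Rlt_dec phi T); [reflexivity|lra]).
          rewrite EG. apply (is_derive_ext_loc H).
          apply (locally_of phi0 T phi). lra. intros u Hu. unfold G. destruct (Rlt_dec u T); [reflexivity|lra].
          apply Hder. lra.
        + assert (EG : G phi = yy phi) by (unfold G; destruct (Rlt_dec phi T); [lra|reflexivity]).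
          rewrite EG. apply (is_derive_ext_loc yy).
          apply (locally_of (T - eta) (T + d) phi). lra.
          intros u Hu. unfold G. destruct (Rlt_dec u T). symmetry; apply Eq; lra. reflexivity.
          apply Hyy. lra.
      - intros phi Hphi HphiT. simpl in HphiT. split. exact Hphi.
        unfold G. destruct (Rlt_dec phi T) as [r|r].
        + apply SH. exact Hphi. simpl; exact r.
        + destruct (Hyy phi ltac:(lra)) as [_ [Hb Hm']]. apply sqrt_lt_sq. apply Rlt_le, Hvp; lra. lra. lra. }
    assert (T + d <= T) by (apply (Hmax (T + d) G); [lra| exact SG]). lra. }
  assert (HLs : L = sqrt (v T)).
  { replace (v T) with (L * L) by lra. rewrite sqrt_square; lra. }
  split.
  - rewrite <- HLs. exact HL.
  - apply (filterlim_ext_loc (fun t => sqrt (H t * H t - v t))).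
    + apply (at_left_of T phi0). exact HT. intros u Hu.
      symmetry. rewrite (is_derive_unique _ _ _ (Hder u Hu)). f_equal. ring.
    + rewrite <- sqrt_0. rewrite <- Heq.
      apply (filterlim_comp _ _ _ (fun t => H t * H t - v t) sqrt (at_left T) (locally (L * L - v T))).
      exact Lsq. apply continuous_sqrt.
Qed.


Lemma init_sol phi0 h0 v : (forall x, continuous v x) -> (forall p, phi0 <= p -> 0 < v p) ->
  sqrt (v phi0) < h0 -> exists T y, phi0 < T /\ solves_in_R0 phi0 h0 v y (Finite T).
Proof.
  intros Hvc Hvp Hh0.
  destruct (sq_of_sqrt_lt (v phi0) h0) as [Hsq Hpos]. apply Rlt_le, Hvp; lra. exact Hh0.
  destruct (local_exist v phi0 h0 Hvc Hpos Hsq) as [d [m [lo [hi [yy [Hd [Hm [Hlo [Hy0 Hyy]]]]]]]]].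
  exists (phi0 + d), yy. split. lra.
  split; [|split; [|split]].
  - exact Hy0.
  - rewrite <- Hy0. apply cont_right. apply (der_cont _ _ _ (proj1 (Hyy phi0 ltac:(lra)))).
  - intros phi H1 H2. simpl in H2. apply Hyy. lra.
  - intros phi H1 H2. simpl in H2. split. exact H1.
    destruct (Hyy phi ltac:(lra)) as [_ [Hb Hm']]. apply sqrt_lt_sq. apply Rlt_le, Hvp; lra. lra. lra.
Qed.

Theorem proposition2 (phi0 : R) (v : R -> R) (h0 : R)
  (Hsmooth : smooth v)
  (Hvpos : forall phi, phi0 <= phi -> 0 < v phi)
  (Hdvpos : forall phi, phi0 <= phi -> 0 < Derive v phi)
  (Hh0 : sqrt (v phi0) < h0) :
  (typeA phi0 h0 v \/ typeB phi0 h0 v) /\ ~ (typeA phi0 h0 v /\ typeB phi0 h0 v).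
Proof.
  assert (Hvc := v_cont v Hsmooth).
  split.
  - set (S := fun T => exists y, phi0 < T /\ solves_in_R0 phi0 h0 v y (Finite T)).
    set (Ts := Lub_Rbar S).
    assert (HTs := Lub_Rbar_correct S). fold Ts in HTs. destruct HTs as [Hub Hlub].
    set (H := fun phi => epsilon (inhabits 0) (fun c => exists T y, phi0 <= phi < T /\
                 solves_in_R0 phi0 h0 v y (Finite T) /\ y phi = c)).
    assert (H_eq : forall T y phi, solves_in_R0 phi0 h0 v y (Finite T) -> phi0 <= phi < T -> H phi = y phi).
    { intros T y phi Sy Hphi.
      assert (Hex : exists c, exists T y, phi0 <= phi < T /\ solves_in_R0 phi0 h0 v y (Finite T) /\ y phi = c).
      { exists (y phi), T, y. auto. }
      destruct (epsilon_spec (inhabits 0) _ Hex) as [T' [y' [Hp [Sy' E]]]].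
      change (y' phi = H phi) in E. rewrite <- E. apply (uniq_fwd phi0 h0 v y' y (Finite T') (Finite T)); auto; simpl; lra. }
    destruct (init_sol phi0 h0 v Hvc Hvpos Hh0) as [T0 [y0 [HT0 S0]]].
    assert (HT0s : Rbar_le T0 Ts) by (apply Hub; exists y0; auto).
    assert (Hab : forall phi : R, Rbar_lt phi Ts -> exists T y, phi < T /\ phi0 < T /\ solves_in_R0 phi0 h0 v y (Finite T)).
    { intros phi Hphi. apply NNPP. intros Hno.
      assert (Hle : Rbar_le Ts phi).
      { apply Hlub. intros x [y [Hx Sy]]. simpl. apply Rnot_lt_le. intros Hc. apply Hno. exists x, y. auto. }
      apply (Rbar_lt_not_le _ _ Hphi Hle). }
    assert (SH : solves_in_R0 phi0 h0 v H Ts).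
    { split; [|split; [|split]].
      - rewrite (H_eq T0 y0 phi0 S0 ltac:(lra)). apply S0.
      - apply (filterlim_ext_loc y0).
        apply (at_right_of phi0 T0). exact HT0. intros u Hu. symmetry. apply (H_eq T0 y0 u S0). lra.
        apply S0.
      - intros phi H1 H2. destruct (Hab phi H2) as [T [y [HT [_ Sy]]]].
        rewrite (H_eq T y phi Sy ltac:(lra)).
        apply (is_derive_ext_loc y).
        apply (locally_of phi0 T phi). lra. intros u Hu. symmetry. apply (H_eq T y u Sy). lra.
        apply Sy. exact H1. simpl; exact HT.
      - intros phi H1 H2. destruct (Hab phi H2) as [T [y [HT [_ Sy]]]].
        rewrite (H_eq T y phi Sy ltac:(lra)). apply Sy. exact H1. simpl; exact HT. }
    destruct Ts as [T| |] eqn:ETs.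
    + left. simpl in HT0s.
      exists T, H. split. lra. split. exact SH.
      apply (finite_case phi0 h0 v H T Hvc Hvpos). lra. exact SH.
      intros T' y HT' Sy. assert (Rbar_le T' (Finite T)) by (apply Hub; exists y; auto). exact H0.
    + right. exists H. exact SH.
    + simpl in HT0s. contradiction.
  - intros [[phi1 [h1 [Hp1 [S1 [Hl1 _]]]]] [h2 S2]].
    assert (Hc2 : continuous h2 phi1) by (apply (solves_cont phi0 h0 v h2 p_infty); auto; exact I).
    assert (Hl2 : filterlim h2 (at_left phi1) (locally (sqrt (v phi1)))).
    { apply (filterlim_ext_loc h1).
      apply (at_left_of phi1 phi0). exact Hp1. intros u Hu.
      apply (uniq_fwd phi0 h0 v h1 h2 (Finite phi1) p_infty); auto. lra. simpl; lra. exact I.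
      exact Hl1. }
    assert (Hl3 := cont_left h2 phi1 Hc2).
    assert (E := @filterlim_locally_unique R R_AbsRing R_NormedModule (at_left phi1)
                   (Proper_StrongProper _ (at_left_proper_filter phi1)) h2 _ _ Hl2 Hl3).
    destruct S2 as [_ [_ [_ Hin]]]. destruct (Hin phi1 ltac:(lra) I) as [_ Hs].
    rewrite <- E in Hs. lra.
Qed.
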